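(* Let $(M,\mathrm{dist})$ be a compact metric space and $\phi$ a topological flow on $M$. Suppose $\mathrm{Sing}(\phi)$ is a finite set and every $p\in\mathrm{Sing}(\phi)$ is Lyapunov stable or Lyapunov unstable. Then $\phi$ has the oriented shadowing property if and only if $\phi$ has the standard shadowing property.
   Context: A topological flow on $M$ is a continuous map $\phi:\mathbb{R}\times M\to M$ with $\phi(0,x)=x$ and $\phi(s+t,x)=\phi(s,\phi(t,x))$ for all $s,t\in\mathbb{R}$, $x\in M$. $\mathrm{Sing}(\phi)=\{x\in M: \phi(t,x)=x\ \forall t\in\mathbb{R}\}$. A point $p\in\mathrm{Sing}(\phi)$ is Lyapunov stable if for every neighborhood $V$ of $p$ there is a neighborhood $U$ of $p$ with $\phi(t,x)\in V$ for all $t\ge 0$, $x\in U$; it is Lyapunov unstable if the same holds with $t\le 0$. A map $\xi:\mathbb{R}\to M$ is a $d$-pseudotrajectory of $\phi$ if $\mathrm{dist}(\xi(t+s),\phi(s,\xi(t)))<d$ for all $t\in\mathbb{R}$, $s\in[0,1]$. $\mathrm{Rep}$ denotes the set of orientation-preserving homeomorphisms $\mathbb{R}\to\mathbb{R}$, and for $\varepsilon>0$, $\mathrm{Rep}(\varepsilon)=\{f\in\mathrm{Rep}: |\frac{f(a)-f(b)}{a-b}-1|<\varepsilon \text{ for all } a>b\}$. $\phi$ has the standard shadowing property if for every $\varepsilon>0$ there is $d>0$ such that for every $d$-pseudotrajectory $\xi$ there are $x\in M$ and $h\in\mathrm{Rep}(\varepsilon)$ with $\mathrm{dist}(\xi(t),\phi(h(t),x))<\varepsilon$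 for all $t\in\mathbb{R}$. $\phi$ has the oriented shadowing property if the same holds with $h\in\mathrm{Rep}$ instead of $h\in\mathrm{Rep}(\varepsilon)$. *)

(* Defs.v *)
From HB Require Import structures.
From mathcomp Require Import all_boot all_order all_algebra.
From mathcomp Require Import all_classical all_reals all_analysis.
Set Implicit Arguments. Unset Strict Implicit. Unset Printing Implicit Defensive.
Import Order.TTheory GRing.Theory Num.Theory.
Import numFieldNormedType.Exports.
Local Open Scope classical_set_scope.
Local Open Scope ring_scope.

Section Flows.
Context {R : realType} {M : metricType R}.

Definition is_flow (phi : R -> M -> M) : Prop :=
  continuous (fun p : R * M => phi p.1 p.2) /\
  (forall x, phi 0 x = x) /\
  (forall s t x, phi (s + t) x = phi s (phi t x)).

Definition Sing (phi : R -> M -> M) : set M :=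
  [set x | forall t, phi t x = x].

Definition lyapunov_stable (phi : R -> M -> M) (p : M) : Prop :=
  forall V : set M, nbhs p V ->
    exists2 U : set M, nbhs p U & forall t x, 0 <= t -> U x -> V (phi t x).

Definition lyapunov_unstable (phi : R -> M -> M) (p : M) : Prop :=
  forall V : set M, nbhs p V ->
    exists2 U : set M, nbhs p U & forall t x, t <= 0 -> U x -> V (phi t x).

Definition pseudotrajectory (phi : R -> M -> M) (d : R) (xi : R -> M) : Prop :=
  forall t s, 0 <= s <= 1 -> mdist (xi (t + s)) (phi s (xi t)) < d.

End Flows.

Definition is_Rep {R : realType} (h : R -> R) : Prop :=
  continuous h /\
  (exists g : R -> R, cancel h g /\ cancel g h /\ continuous g) /\
  (forall a b, a < b -> h a < h b).

Definition is_Rep_eps {R : realType} (eps : R) (h : R -> R) : Prop :=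
  is_Rep h /\ (forall a b, b < a -> `| (h a - h b) / (a - b) - 1 | < eps).

Definition standard_shadowing {R : realType} {M : metricType R}
  (phi : R -> M -> M) : Prop :=
  forall eps : R, 0 < eps -> exists2 d : R, 0 < d &
    forall xi : R -> M, pseudotrajectory phi d xi ->
      exists x : M, exists2 h : R -> R, is_Rep_eps eps h &
        forall t, mdist (xi t) (phi (h t) x) < eps.

Definition oriented_shadowing {R : realType} {M : metricType R}
  (phi : R -> M -> M) : Prop :=
  forall eps : R, 0 < eps -> exists2 d : R, 0 < d &
    forall xi : R -> M, pseudotrajectory phi d xi ->
      exists x : M, exists2 h : R -> R, is_Rep h &
        forall t, mdist (xi t) (phi (h t) x) < eps.

(* Main.v *)
Require Import Defs.
From HB Require Import structures.
From mathcomp Require Import all_boot all_order all_algebra.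
From mathcomp Require Import all_classical all_reals all_analysis.
From mathcomp Require Import ring lra finmap.
Import Order.TTheory GRing.Theory Num.Theory.
Import numFieldNormedType.Exports.
Local Open Scope classical_set_scope.
Local Open Scope ring_scope.

Section RealLemmas.
Context {R : realType}.

Lemma lip_cont (c : R -> R) (K : R) : 0 <= K ->
  (forall a b, `|c a - c b| <= K * `|a - b|) -> continuous c.
Proof.
move=> K0 Hc x; apply/cvgrPdist_lt => e e0.
have d0 : 0 < e / (K + 1) by rewrite divr_gt0 // ltr_wpDl.
near=> y.
have xy : `|x - y| < e / (K + 1) by near: y; apply: filterS (nbhsx_ballx x _ d0) => z; rewrite -ball_normE.
apply: (le_lt_trans (Hc x y)).
have K1 : 0 < K + 1 by rewrite ltr_wpDl.
rewrite (@le_lt_trans _ _ (K * (e / (K+1))))//.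
  by rewrite ler_wpM2l // ltW.
rewrite mulrA ltr_pdivrMr // mulrC ltr_pM2l // ltrDl //.
Unshelve. all: by end_near. Qed.

Lemma tri (u v : R) : `|u| <= `|v| + `|u - v|.
Proof. by have := ler_normD v (u - v); rewrite addrC subrK. Qed.

Lemma normLR (x y : R) : `|x| <= y -> - y <= x /\ x <= y.
Proof. by rewrite ler_norml => /andP. Qed.

Lemma lip_Rep (c : R -> R) (L eps : R) : 0 <= L -> L < eps -> L <= 2^-1 ->
  (forall a b, `|c a - c b| <= L * `|a - b|) -> is_Rep_eps eps (fun t => t + c t).
Proof.
move=> L0 Leps Lh Hc; set f := fun t => t + c t.
have fE : forall a b, f a - f b - (a - b) = c a - c b by move=> a b; rewrite /f; ring.
have key : forall a b, `|(f a - f b) - (a - b)| <= L * `|a - b| by move=> a b; rewrite fE.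
have lowb : forall a b, `|a - b| <= 2 * `|f a - f b|.
  move=> a b; have := key a b; have := tri (a - b) (f a - f b).
  move=> H1 H2; rewrite (distrC (a - b)) in H1; have := normr_ge0 (a - b); nra.
have mono : forall a b, a < b -> f a < f b.
  move=> a b ab; have /normLR [H1 H2] := Hc b a.
  rewrite gtr0_norm ?subr_gt0 // in H1 H2.
  rewrite /f; rewrite -subr_gt0 in ab; nra.
have fc : continuous f.
  apply: (@lip_cont _ (1 + L)); first by rewrite addr_ge0.
  move=> a b; have := key a b; have := tri (f a - f b) (a - b); nra.
have inj : injective f.
  move=> a b fab; case: (ltgtP a b) => // [/mono|/mono]; rewrite fab ltxx //.
have surj : forall y, exists t, f t = y.
  move=> y; set A := 2 * `|c y|.
  have A0 : 0 <= A by rewrite mulr_ge0.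
  have /normLR [cy1 cy2] : `|c y| <= `|c y| by [].
  have lo : f (y - A) <= y.
    have /normLR [H1 H2] := Hc (y - A) y.
    have e : y - A - y = - A by ring.
    rewrite e normrN ger0_norm // in H1 H2.
    rewrite /f; rewrite /A in H1 H2 A0 *; nra.
  have hi : y <= f (y + A).
    have /normLR [H1 H2] := Hc (y + A) y.
    have e : y + A - y = A by ring.
    rewrite e ger0_norm // in H1 H2.
    rewrite /f; rewrite /A in H1 H2 A0 *; nra.
  have yA : y - A <= y + A by rewrite lerD2l; nra.
  have cf : {within `[y - A, y + A], continuous f} by apply: continuous_subspaceT.
  have mm : Num.min (f (y - A)) (f (y + A)) <= y <= Num.max (f (y - A)) (f (y + A)).
    by rewrite ge_min lo /= le_max hi orbT.
  have [t _ ft] := IVT yA cf mm.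
  by exists t.
pose g y := projT1 (cid (surj y)).
have fg : cancel g f by move=> y; rewrite /g; case: cid.
have gf : cancel f g by move=> t; apply: inj; rewrite fg.
split; last first.
  move=> a b ba; have /normLR [H1 H2] := Hc a b.
  rewrite gtr0_norm ?subr_gt0 // in H1 H2.
  have ab0 : 0 < a - b by rewrite subr_gt0.
  have -> : (f a - f b) / (a - b) - 1 = (c a - c b) / (a - b).
    by rewrite /f; field; rewrite gt_eqF.
  have iab : 0 < (a - b)^-1 by rewrite invr_gt0.
  rewrite normrM (gtr0_norm iab) ltr_pdivrMr //.
  have := Hc a b; rewrite (gtr0_norm ab0) => H; apply: (le_lt_trans H).
  by rewrite ltr_pM2r.
split => //; split; last exact: mono.
exists g; split => //; split => //.
apply: (@lip_cont _ 2) => // a b.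
have := lowb (g a) (g b); by rewrite !fg.
Qed.

Lemma dtri (a b d : R) : `|a - d| <= `|a - b| + `|b - d|.
Proof. by have := ler_normD (a - b) (b - d); rewrite addrA subrK. Qed.

Lemma mcshane (J : set R) (k : R -> R) (s : R) : J !=set0 -> 0 <= s ->
  (forall a b, J a -> J b -> `|k a - k b| <= s * (`|a - b| + 1)) ->
  exists c : R -> R, (forall a b, `|c a - c b| <= (2 * s) * `|a - b|) /\
    (forall t, J t -> k t - s <= c t <= k t).
Proof.
move=> [t0 Jt0] s0 Hk.
pose E t := [set k u + 2 * s * `|t - u| | u in J].
have Ene : forall t, E t !=set0 by move=> t; exists (k t0 + 2 * s * `|t - t0|); exists t0.
have Elb : forall t, has_lbound (E t).
  move=> t; exists (k t0 - s - s * `|t - t0|) => _ [u Ju <-].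
  have /normLR [H1 H2] := Hk u t0 Ju Jt0.
  have := dtri u t t0; rewrite (distrC u t) => H3.
  have := normr_ge0 (t - u); nra.
exists (fun t => inf (E t)); split.
  have half : forall a b, inf (E a) - 2 * s * `|a - b| <= inf (E b).
    move=> a b; apply: lb_le_inf => // _ [u Ju <-].
    have H1 := ge_inf (Elb a) (ex_intro2 _ _ u Ju erefl).
    have := dtri a b u => H2; nra.
  move=> a b; rewrite ler_norml; apply/andP; split.
    by have := half b a; rewrite distrC; lra.
  by have := half a b; lra.
move=> t Jt; apply/andP; split.
  apply: lb_le_inf => // _ [u Ju <-].
  have /normLR [H1 H2] := Hk u t Ju Jt.
  rewrite (distrC u t) in H1 H2; have := normr_ge0 (t - u); nra.
have := ge_inf (Elb t) (ex_intro2 _ _ t Jt erefl).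
by rewrite subrr normr0 mulr0 addr0.
Qed.

Lemma chain (J : set R) (k : R -> R) (s : R) : 0 <= s ->
  (forall a b r, J a -> J b -> a <= r <= b -> J r) ->
  (forall a b, J a -> J b -> a <= b <= a + 1 -> `|k b - k a| <= s) ->
  forall a b, J a -> J b -> `|k a - k b| <= s * (`|a - b| + 1).
Proof.
move=> s0 Jint Hu.
have ind : forall n : nat, forall a b, J a -> J b -> a <= b <= a + n%:R ->
    `|k b - k a| <= n%:R * s.
  elim=> [|n IH] a b Ja Jb.
    rewrite addr0 -eq_le => /eqP ->; by rewrite subrr normr0 mul0r.
  move=> /andP[ab bn]; have [b1|b1] := leP b (a + 1).
    rewrite (le_trans (Hu a b Ja Jb _)) ?ab //.
    by rewrite -[X in X <= _]mul1r ler_wpM2r // ler1n.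
  have Ja1 : J (a + 1) by apply: (Jint a b) => //; rewrite lerDl ler01 ltW.
  have c1 : a + 1 <= b <= a + 1 + n%:R.
    by apply/andP; split; [rewrite ltW | move: bn; rewrite -natr1; lra].
  have H1 := IH (a + 1) b Ja1 Jb c1; have H2 := Hu a (a + 1) Ja Ja1.
  have : a <= a + 1 <= a + 1 by rewrite lexx lerDl ler01.
  move=> /H2 H3; have := dtri (k b) (k (a + 1)) (k a); rewrite -natr1 mulrDl mul1r; lra.
have key : forall a b, J a -> J b -> a <= b -> `|k a - k b| <= s * (`|a - b| + 1).
  move=> a b Ja Jb ab; rewrite distrC (distrC a b) (@ger0_norm _ (b - a)); last by rewrite subr_ge0.
  have /truncn_itv /andP[t1 t2] : 0 <= b - a by rewrite subr_ge0.
  have c1 : a <= b <= a + (Num.truncn (b - a)).+1%:R by apply/andP; split => //; lra.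
  have H := ind (Num.truncn (b - a)).+1 a b Ja Jb c1; apply: (le_trans H); rewrite [X in _ <= X]mulrC ler_wpM2r //; move: t1; rewrite -natr1; lra.
move=> a b Ja Jb; have [ab|ba] := leP a b; first exact: key.
by rewrite distrC (distrC a); apply: key => //; rewrite ltW.
Qed.
End RealLemmas.

Section Dyn.
Context {R : realType} {M : metricType R}.

Lemma mtri (x y z : M) : mdist x z <= mdist x y + mdist y z.
Proof. exact: metric_triangle. Qed.
Lemma msym (x y : M) : mdist x y = mdist y x.
Proof. exact: metric_sym. Qed.

Lemma unif_compactK {X : pseudoMetricType R} (K : set X) (P : R -> X -> Prop) : compact K ->
  (forall d d' z, 0 < d' <= d -> P d z -> P d' z) ->
  (forall z, K z -> exists2 r, 0 < r & exists2 d, 0 < d & forall z', ball z r z' -> P d z') ->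
  exists2 d, 0 < d & forall z, K z -> P d z.
Proof.
move=> cM mono loc.
have := (compact_near_coveringP K).1 cM R (nbhs (0:R)) (fun d z => 0 < d -> P d z) _.
case.
- move=> z Kz; have [r r0 [d d0 Hd]] := loc z Kz.
  exists (ball z r, ball (0:R) d); first by split; apply: nbhsx_ballx.
  move=> [z' b] [/= zz' bb] b0; apply: (mono d) => //.
    rewrite b0 /=; move: bb; rewrite -ball_normE /= sub0r normrN gtr0_norm //; exact: ltW.
  by apply: Hd.
- move=> e /= e0 He.
  exists (e / 2); first by rewrite divr_gt0.
  move=> z Kz; apply: (He (e / 2)) => //; last by rewrite divr_gt0.
  by rewrite /= sub0r normrN gtr0_norm ?divr_gt0 // ltr_pdivrMr // ltr_pMr // ltr1n.
Qed.

Lemma unif_compact (P : R -> M -> Prop) : compact [set: M] ->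
  (forall d d' z, 0 < d' <= d -> P d z -> P d' z) ->
  (forall z, exists2 r, 0 < r & exists2 d, 0 < d & forall z', mdist z z' < r -> P d z') ->
  exists2 d, 0 < d & forall z, P d z.
Proof.
move=> cM mono loc.
have loc' : forall z, setT z -> exists2 r, 0 < r & exists2 d, 0 < d & forall z', ball z r z' -> P d z'.
  move=> z _; have [r r0 [d d0 Hd]] := loc z; exists r => //; exists d => // z'.
  by rewrite ballEmdist; apply: Hd.
have [d d0 Hd] := @unif_compactK M setT P cM mono loc'.
by exists d => // z; apply: Hd.
Qed.

Lemma ballRM (s s' : R) (y y' : M) r : `|s - s'| < r -> mdist y y' < r -> ball (s, y) r (s', y').
Proof. move=> H1 H2; split => /=; last by rewrite ballEmdist. by rewrite -ball_normE. Qed.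

Lemma ballRM' (s s' : R) (y y' : M) r : ball (s, y) r (s', y') -> `|s - s'| < r /\ mdist y y' < r.
Proof. by case => /= H1 H2; split; [move: H1; rewrite -ball_normE | move: H2; rewrite ballEmdist]. Qed.

End Dyn.

Section Flow.
Context {R : realType} {M : metricType R} (phi : R -> M -> M) (fl : is_flow phi).

Lemma phi0 x : phi 0 x = x. Proof. by case: fl => _ []. Qed.
Lemma phiD s t x : phi (s + t) x = phi s (phi t x). Proof. by case: fl => _ []. Qed.

Lemma phi_cont s0 z0 e : 0 < e -> exists2 r, 0 < r &
  forall s z, `|s - s0| < r -> mdist z0 z < r -> mdist (phi s0 z0) (phi s z) < e.
Proof.
move=> e0; have [Hc _] := fl.
have := Hc (s0, z0); move/metricType_numDomainType.cvgrPdist_lt => /(_ e e0).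
case=> [[P Q] /= [/nbhs_ballP [r1 r10 H1] /nbhs_ballP [r2 r20 H2]] PQ].
exists (Num.min r1 r2); first by rewrite lt_min r10 r20.
move=> s z; rewrite !lt_min => /andP[s1 _] /andP[_ z2].
apply: (PQ (s, z)); split => /=.
  by apply: H1; rewrite -ball_normE /= distrC.
by apply: H2; rewrite ballEmdist.
Qed.

Lemma time_mod : compact [set: M] -> forall al, 0 < al ->
  exists2 be, 0 < be & forall a z, `|a| <= be -> mdist z (phi a z) < al.
Proof.
move=> cM al al0.
pose P := (fun (be : R) (z : M) => forall a, `|a| <= be -> mdist z (phi a z) < al).
have mono : forall d d' z, 0 < d' <= d -> P d z -> P d' z.
  by move=> d d' z /andP[_ dd] H a ad; apply: H; apply: le_trans dd.
suff loc : forall z, exists2 r, 0 < r & exists2 d, 0 < d & forall z', mdist z z' < r -> P d z'.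
  move: (@unif_compact R M P cM mono loc) => [be be0 H].
  exists be => // a z; exact: H.
move=> z; have al2 : 0 < al / 2 by rewrite divr_gt0.
have [r r0 Hr] := phi_cont 0 z _ al2.
have r'0 : 0 < Num.min r (al / 2) by rewrite lt_min r0 al2.
exists (Num.min r (al / 2)) => //; exists (Num.min r (al / 2) / 2); first by rewrite divr_gt0.
move=> z' zz' a aa; move: zz'; rewrite lt_min => /andP[z1 z2].
have : `|a - 0| < r.
  rewrite subr0; apply: (le_lt_trans aa); rewrite ltr_pdivrMr // (@le_lt_trans _ _ r) ?ge_min ?lexx //.
  by rewrite ltr_pMr // ltr1n.
move=> /(Hr _ _) /(_ z1); rewrite phi0 => H.
apply: (le_lt_trans (mtri z' z _)); rewrite msym.
by rewrite [al]splitr ltrD.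
Qed.

Lemma space_mod : compact [set: M] -> forall m, 0 < m ->
  exists2 de, 0 < de & forall s y y', 0 <= s <= 1 -> mdist y y' < de ->
    mdist (phi s y) (phi s y') < m.
Proof.
move=> cM m m0.
have cK : compact (`[(0:R), 1] `*` [set: M]) by apply: compact_setX => //; exact: segment_compact.
pose P := (fun (de : R) (p : R * M) => forall y', mdist p.2 y' < de ->
   mdist (phi p.1 p.2) (phi p.1 y') < m).
have mono : forall d d' z, 0 < d' <= d -> P d z -> P d' z.
  by move=> d d' [s y] /andP[_ dd] H y' yy; apply: H; apply: lt_le_trans dd.
suff loc : forall z, (`[(0:R), 1] `*` [set: M]) z -> exists2 r, 0 < r & exists2 d, 0 < d & forall z', ball z r z' -> P d z'.
  have [de de0 H] := @unif_compactK R _ _ P cK mono loc.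
  exists de => // s y y' s01 yy; apply: (H (s, y)) => //; split => //=.
move=> [s0 z0] _; have m2 : 0 < m / 2 by rewrite divr_gt0.
have [r r0 Hr] := phi_cont s0 z0 _ m2.
have r2 : 0 < r / 2 by rewrite divr_gt0.
exists (r / 2) => //; exists (r / 2) => // [[s y]] /ballRM' [/= H1 H2] y' H3.
have hr : r / 2 < r by rewrite ltr_pdivrMr // ltr_pMr // ltr1n.
have H4 := Hr s y; have H5 := Hr s y'.
have e1 : `|s - s0| < r by rewrite distrC (lt_trans H1).
have e2 : mdist z0 y < r by apply: lt_trans H2 _.
have e3 : mdist z0 y' < r.
  apply: (le_lt_trans (mtri z0 y y')); rewrite [r]splitr; exact: ltrD.
apply: (le_lt_trans (mtri _ (phi s0 z0) _)); rewrite [m]splitr msym; apply: ltrD.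
  exact: H4.
exact: H5.
Qed.

Definition far (eta : R) (z : M) := forall p, Sing phi p -> eta <= mdist p z.

Lemma nonfar_local eta z : ~ far eta z ->
  exists2 r, 0 < r & forall z', mdist z z' < r -> ~ far eta z'.
Proof.
move=> /existsNP [p /not_implyP [Sp /negP]]; rewrite -ltNge => pz.
exists (eta - mdist p z); first by rewrite subr_gt0.
move=> z' zz' Fz'; have := Fz' p Sp; have := mtri p z z'; lra.
Qed.

Lemma lower_pos t z : phi t z != z ->
  exists2 r, 0 < r & forall z', mdist z z' < r -> mdist z (phi t z) / 3 <= mdist z' (phi t z').
Proof.
move=> ne; set D := mdist z (phi t z).
have D0 : 0 < D by rewrite /D mdist_gt0 eq_sym.
have D3 : 0 < D / 3 by rewrite divr_gt0.
have [r r0 Hr] := phi_cont t z _ D3.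
exists (Num.min r (D / 3)); first by rewrite lt_min r0 D3.
move=> z'; rewrite lt_min => /andP[z1 z2].
have H := Hr t z'; rewrite subrr normr0 in H; have {H}H := H r0 z1.
have := mtri z z' (phi t z); have := mtri z' (phi t z') (phi t z).
rewrite (msym (phi t z') (phi t z)) -/D; lra.
Qed.

Lemma period_iter s z n : phi s z = z -> phi (n%:R * s) z = z.
Proof.
move=> Ps; elim: n => [|n IH]; first by rewrite mul0r phi0.
by rewrite -natr1 mulrDl mul1r phiD Ps IH.
Qed.

Lemma not_sing_pos z : ~ Sing phi z -> exists2 t, 0 <= t & phi t z != z.
Proof.
move=> /existsNP [t0 /eqP H0]; have [t0p|t0n] := leP 0 t0; first by exists t0.
exists (- t0); first by rewrite oppr_ge0 ltW.
apply: contra H0 => /eqP H; apply/eqP.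
by rewrite -{1}H -phiD subrr phi0.
Qed.

Lemma no_small_period : compact [set: M] -> forall eta, 0 < eta ->
  exists2 s0, 0 < s0 & forall s z, 0 < s <= s0 -> far eta z -> phi s z != z.
Proof.
move=> cM eta eta0.
pose P := (fun (mu : R) (z : M) => far eta z -> exists t, [/\ 0 <= t, t * mu <= 1 & mu <= mdist z (phi t z)]).
have mono : forall d d' z, 0 < d' <= d -> P d z -> P d' z.
  move=> d d' z /andP[d0 dd] H Fz; have [t [t0 t1 t2]] := H Fz.
  by exists t; split => //; nra.
have loc : forall z, exists2 r, 0 < r & exists2 d, 0 < d & forall z', mdist z z' < r -> P d z'.
  move=> z; have [Fz|nFz] := pselect (far eta z); last first.
    have [r r0 Hr] := nonfar_local _ _ nFz; exists r => //; exists 1 => // z' /Hr H /H [].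
  have nS : ~ Sing phi z.
    by move=> Sz; have := Fz z Sz; rewrite mdistxx; lra.
  have [t1 t10 ne] := not_sing_pos _ nS.
  have [r r0 Hr] := lower_pos _ _ ne; exists r => //.
  set D := mdist z (phi t1 z).
  have D0 : 0 < D by rewrite /D mdist_gt0 eq_sym.
  have t11 : 0 < t1 + 1 by lra.
  exists (Num.min (D / 3) (t1 + 1)^-1); first by rewrite lt_min divr_gt0 // invr_gt0.
  move=> z' /Hr H _; exists t1; split => //.
    rewrite (@le_trans _ _ (t1 * (t1 + 1)^-1)) //; first by rewrite ler_wpM2l // ge_min lexx orbT.
    by rewrite ler_pdivrMr // mul1r; lra.
  by rewrite (le_trans _ H) // ge_min lexx.
have [mu mu0 Hmu] := @unif_compact R M P cM mono loc.
have [be be0 Hbe] := time_mod cM _ mu0.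
exists be => // s z /andP[s0 sb] Fz; apply/eqP => Ps.
have [t [t0 t1 t2]] := Hmu z Fz.
have /truncn_itv/andP[n1 n2] : 0 <= t / s by rewrite divr_ge0 // ltW.
set n := Num.truncn (t / s) in n1 n2.
rewrite ler_pdivlMr // in n1; rewrite ltr_pdivrMr // in n2.
have E : phi t z = phi (t - n%:R * s) z by rewrite -{1}(subrK (n%:R * s) t) phiD period_iter.
have : `|t - n%:R * s| <= be.
  rewrite ger0_norm; last by rewrite subr_ge0.
  move: n2; rewrite -natr1 mulrDl mul1r; lra.
by move=> /(Hbe _ z); rewrite -E; lra.
Qed.

Lemma m_pos : compact [set: M] -> forall eta s, 0 < eta -> 0 < s ->
  (forall z, far eta z -> phi s z != z) ->
  exists2 m, 0 < m & forall z, far eta z -> m <= mdist z (phi s z) /\ m <= mdist z (phi (- s) z).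
Proof.
move=> cM eta s eta0 s0 Hs.
pose P := (fun (m : R) (z : M) => far eta z -> m <= mdist z (phi s z) /\ m <= mdist z (phi (- s) z)).
have mono : forall d d' z, 0 < d' <= d -> P d z -> P d' z.
  move=> d d' z /andP[d0 dd] H Fz; have [h1 h2] := H Fz; split; lra.
have loc : forall z, exists2 r, 0 < r & exists2 d, 0 < d & forall z', mdist z z' < r -> P d z'.
  move=> z; have [Fz|nFz] := pselect (far eta z); last first.
    have [r r0 Hr] := nonfar_local _ _ nFz; exists r => //; exists 1 => // z' /Hr H /H [].
  have ne1 := Hs z Fz.
  have ne2 : phi (- s) z != z.
    apply: contra ne1 => /eqP H; apply/eqP.
    by rewrite -{1}H -phiD subrr phi0.
  have [r1 r10 Hr1] := lower_pos _ _ ne1; have [r2 r20 Hr2] := lower_pos _ _ ne2.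
  have D1 : 0 < mdist z (phi s z) by rewrite mdist_gt0 eq_sym.
  have D2 : 0 < mdist z (phi (- s) z) by rewrite mdist_gt0 eq_sym.
  exists (Num.min r1 r2); first by rewrite lt_min r10 r20.
  exists (Num.min (mdist z (phi s z) / 3) (mdist z (phi (- s) z) / 3)).
    by rewrite lt_min !divr_gt0.
  move=> z'; rewrite lt_min => /andP[/Hr1 H1 /Hr2 H2] _; split.
    by rewrite (le_trans _ H1) // ge_min lexx.
  by rewrite (le_trans _ H2) // ge_min lexx orbT.
have [m m0 Hm] := @unif_compact R M P cM mono loc.
by exists m.
Qed.

Definition lyap_prop (rho eta : R) (p : M) :=
  (lyapunov_stable phi p -> forall x, mdist p x < eta -> forall t, 0 <= t -> mdist p (phi t x) < rho) /\
  (~ lyapunov_stable phi p -> forall x, mdist p x < eta -> forall t, t <= 0 -> mdist p (phi t x) < rho).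

Lemma lyap_eta : finite_set (Sing phi) ->
  (forall p, Sing phi p -> lyapunov_stable phi p \/ lyapunov_unstable phi p) ->
  forall rho, 0 < rho -> exists2 eta, 0 < eta & eta <= rho /\ forall p, Sing phi p -> lyap_prop rho eta p.
Proof.
move=> fin ly rho rho0.
have [X HX] := finite_fsetP.1 fin.
pose Q p (eta : R) := 0 < eta -> lyap_prop rho eta p.
have HQ : forall p : M, p \in X -> nbhs (0:R) (Q p).
  move=> p pX; have Sp : Sing phi p by rewrite HX /=.
  have V0 : nbhs p (ball p rho) by apply: nbhsx_ballx.
  have key : exists2 r, 0 < r & lyap_prop rho r p.
    have [st|nst] := pselect (lyapunov_stable phi p).
      have [U /nbhs_ballP [r r0 Ur] HU] := st _ V0.
      exists r => //; split => // _ x px t t0.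
      have Ux : U x by apply: Ur; rewrite ballEmdist.
      by have := HU t x t0 Ux; rewrite ballEmdist.
    have [//|un] := ly p Sp.
    have [U /nbhs_ballP [r r0 Ur] HU] := un _ V0.
    exists r => //; split => // _ x px t t0.
    have Ux : U x by apply: Ur; rewrite ballEmdist.
    by have := HU t x t0 Ux; rewrite ballEmdist.
  have [r r0 [K1 K2]] := key; apply/nbhs_ballP; exists r => // e /= re e0.
  move: re; rewrite -ball_normE /= sub0r normrN gtr0_norm // => re.
  split => [st x px t t0|nst x px t t0].
    by apply: K1 => //; apply: lt_trans re.
  by apply: K2 => //; apply: lt_trans re.
have H : nbhs (0:R) (\bigcap_(i in [set` X]) Q i) by apply: filter_bigI.
have [e e0 He] := (nbhs_ballP _ _).1 H.
have e2 : 0 < Num.min (e / 2) rho by rewrite lt_min divr_gt0.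
exists (Num.min (e / 2) rho) => //; split; first by rewrite ge_min lexx orbT.
move=> p Sp; have m1 : Num.min (e / 2) rho <= e / 2 by rewrite ge_min lexx.
have Hb : ball (0:R) e (Num.min (e / 2) rho).
  by rewrite -ball_normE /= sub0r normrN gtr0_norm //; lra.
rewrite HX in Sp; exact: (He _ Hb p Sp e2).
Qed.
End Flow.

Section Main.
Context {R : realType} {M : metricType R} (phi : R -> M -> M) (fl : is_flow phi).
Context (eps rho eta be sig ep d m de : R).
Context (rho0 : 0 < rho) (rhoe : 4 * rho < eps) (eta0 : 0 < eta).
Context (Heta : forall p, Sing phi p -> lyap_prop phi rho eta p).
Context (Hbe1 : forall a z, `|a| <= be -> mdist z (phi a z) < eta / 2).
Context (Hbe2 : forall a z, `|a| <= be -> mdist z (phi a z) < rho).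
Context (sig0 : 0 < sig) (sigbe : 3 * sig <= be) (sig4 : sig <= 4^-1) (sige : 2 * sig < eps).
Context (m0 : 0 < m).
Context (Hm : forall z, far phi (eta / 2) z -> m <= mdist z (phi sig z) /\ m <= mdist z (phi (- sig) z)).
Context (Hde : forall s y y', 0 <= s <= 1 -> mdist y y' < de -> mdist (phi s y) (phi s y') < m / 3).
Context (epde : ep <= de) (epm : ep <= m / 3) (eprho : ep <= rho) (dm : d <= m / 3).
Context (xi : R -> M) (pseudo : pseudotrajectory phi d xi).
Context (x : M) (h : R -> R) (hR : is_Rep h) (Hh : forall t, mdist (xi t) (phi (h t) x) < ep).

Local Notation y u := (phi u x).
Local Notation PD := (@phiD _ _ phi fl).
Local Notation P0 := (@phi0 _ _ phi fl).

Lemma hmono a b : a < b -> h a < h b. Proof. by case: hR => _ [_]; apply. Qed.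
Lemma hle a b : a <= b -> h a <= h b.
Proof. by rewrite le_eqVlt => /orP[/eqP->|/(hmono _ _)/ltW] //. Qed.
Lemma hle' a b : h a <= h b -> a <= b.
Proof. by apply: contraTT; rewrite -!ltNge => /(hmono _ _). Qed.

Definition stab p := lyapunov_stable phi p.
Definition Ns u := exists p, [/\ Sing phi p, stab p & mdist p (y u) < eta].
Definition Nu u := exists p, [/\ Sing phi p, ~ stab p & mdist p (y u) < eta].
Definition A t := exists u, u <= h t /\ Ns u.
Definition B t := exists u, h t <= u /\ Nu u.
Definition I t := ~ A t /\ ~ B t.

Lemma Ns_fwd u : Ns u -> exists p, forall u', u <= u' -> mdist p (y u') < rho.
Proof.
move=> [p [Sp st pu]]; exists p => u' uu'.
have [H _] := Heta p Sp; have := H st (y u) pu (u' - u); rewrite subr_ge0 => /(_ uu').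
by rewrite -PD subrK.
Qed.

Lemma Nu_bwd u : Nu u -> exists p, forall u', u' <= u -> mdist p (y u') < rho.
Proof.
move=> [p [Sp st pu]]; exists p => u' uu'.
have [_ H] := Heta p Sp; have := H st (y u) pu (u' - u); rewrite subr_le0 => /(_ uu').
by rewrite -PD subrK.
Qed.

Lemma far_of u : ~ Ns u -> ~ Nu u -> far phi eta (y u).
Proof.
move=> nNs nNu p Sp; rewrite leNgt; apply/negP => pu.
have [st|nst] := pselect (stab p).
  by apply: nNs; exists p.
by apply: nNu; exists p.
Qed.

Lemma A_up t t' : A t -> t <= t' -> A t'.
Proof. move=> [u [ut Nsu]] tt'; exists u; split => //; exact: (le_trans ut (hle _ _ tt')). Qed.
Lemma B_down t t' : B t -> t' <= t -> B t'.
Proof. move=> [u [ut Nuu]] tt'; exists u; split => //; exact: (le_trans (hle _ _ tt') ut). Qed.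

Lemma I_int a b r : I a -> I b -> a <= r <= b -> I r.
Proof.
move=> [_ nBa] [nAb _] /andP[ar rb]; split.
  by move=> Ar; apply: nAb; apply: (A_up _ _ Ar rb).
by move=> Br; apply: nBa; apply: (B_down _ _ Br ar).
Qed.

Lemma I_far a b u : I a -> I b -> h a <= u <= h b -> far phi eta (y u).
Proof.
move=> [_ nBa] [nAb _] /andP[au ub]; apply: far_of.
  by move=> Nsu; apply: nAb; exists u.
by move=> Nuu; apply: nBa; exists u.
Qed.


Lemma econt a : continuous (fun r => `|h (a + r) - h a - r|).
Proof.
have hc : continuous h by case: hR.
move=> r0.
apply: (@continuous_comp _ _ _ (fun r => h (a + r) - h a - r) Num.norm); last first.
  exact: norm_continuous.
apply: continuousB; last exact: cvg_id.
apply: continuousB; last exact: cvg_cst.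
apply: (@continuous_comp _ _ _ (fun r => a + r) h); last exact: hc.
apply: continuousD; [exact: cvg_cst | exact: cvg_id].
Qed.

Lemma unit_est a b : I a -> I b -> a <= b <= a + 1 ->
  `|(h b - b) - (h a - a)| <= sig.
Proof.
move=> Ia Ib /andP[ab ba1].
set s := b - a.
have bE : b = a + s by rewrite /s addrC subrK.
have s01 : 0 <= s <= 1 by apply/andP; split; rewrite /s; lra.
have -> : (h b - b) - (h a - a) = h (a + s) - h a - s by rewrite bE; ring.
rewrite leNgt; apply/negP => Hs.
have s0 : 0 <= s by case/andP: s01.
have cw : {within `[0, s], continuous (fun r => `|h (a + r) - h a - r|)}.
  by apply: continuous_subspaceT; exact: econt.
have mm : Num.min `|h (a + 0) - h a - 0| `|h (a + s) - h a - s| <= sig <=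
          Num.max `|h (a + 0) - h a - 0| `|h (a + s) - h a - s|.
  rewrite addr0 subrr subr0 normr0 ge_min le_max; apply/andP; split.
    by rewrite ltW.
  by rewrite (ltW Hs) orbT.
have [r /andP[r0 rs] er] := IVT s0 cw mm.
move: r0 rs; rewrite !bnd_simp => r0 rs.
set e := h (a + r) - h a - r in er.
set u := h (a + r).
have Fu : far phi eta (y u).
  apply: (I_far a b) => //; apply/andP; split; apply: hle; lra.
set z := y (h a + r).
have zE : z = phi (- e) (y u) by rewrite /z -PD; congr (phi _ x); rewrite /e /u; ring.
have uE : y u = phi e z by rewrite /z -PD; congr (phi _ x); rewrite /e /u; ring.
have ne : `|- e| <= be.
  rewrite normrN er; have := sigbe; have := sig0; lra.
have uz : mdist (y u) z < eta / 2 by rewrite zE; apply: Hbe1.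
have Fz : far phi (eta / 2) z.
  move=> p Sp; have := Fu p Sp; have := mtri p z (y u); rewrite (msym z (y u)); lra.
have lowm : m <= mdist z (y u).
  have [H1 H2] := Hm z Fz; rewrite uE.
  have : e = sig \/ e = - sig.
    have : 0 <= e \/ e < 0 by case: (leP 0 e); [left|right].
    case=> [e0|e0]; [left; by rewrite -er ger0_norm | right; by rewrite -er ltr0_norm // opprK].
  by case=> ->.
have zE2 : z = phi r (y (h a)) by rewrite /z -PD addrC.
have r01 : 0 <= r <= 1 by apply/andP; split; lra.
have H1 := Hde _ _ _ r01 (lt_le_trans (Hh a) epde); rewrite -zE2 in H1.
have H2 := pseudo a r r01.
have H3 := Hh (a + r); rewrite -/u in H3.
have := mtri z (phi r (xi a)) (y u); have := mtri (phi r (xi a)) (xi (a + r)) (y u).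
have := msym z (phi r (xi a)); have := msym (phi r (xi a)) (xi (a + r)).
have := epm; have := dm; lra.
Qed.

Lemma hcont_at S e : 0 < e -> exists2 th, 0 < th & forall r, `|S - r| < th -> `|h S - h r| < e.
Proof.
move=> e0; have hc : continuous h by case: hR.
have := hc S; move/cvgrPdist_lt => /(_ e e0) /nbhs_ballP [th th0 Hth].
exists th => // r Sr; apply: Hth; by rewrite -ball_normE.
Qed.

Lemma yclose v w : `|v - w| <= 3 * sig -> mdist (y w) (y v) < rho.
Proof.
move=> vw; have -> : y v = phi (v - w) (y w) by rewrite -PD subrK.
by apply: Hbe2; apply: le_trans vw sigbe.
Qed.

Lemma core (J : set R) (c : R -> R) :
  J !=set0 ->
  (forall a b, `|c a - c b| <= (2 * sig) * `|a - b|) ->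
  (forall t, J t -> (h t - t) - sig <= c t <= h t - t) ->
  (forall t, ~ J t -> (A t /\ forall t', J t' -> t' < t) \/ (B t /\ forall t', J t' -> t < t')) ->
  forall t, mdist (xi t) (y (t + c t)) < eps.
Proof.
move=> Jne Lc cJ PJ t.
have s4 := sig4; have s0 := sig0; have r4 := rhoe; have er := eprho; have r0 := rho0; have sb := sigbe.
have Ht := Hh t.
have [Jt|nJt] := pselect (J t).
  have /andP[c1 c2] := cJ t Jt.
  have Hc : `|t + c t - h t| <= 3 * sig by rewrite ler_norml; apply/andP; split; lra.
  have H := yclose _ _ Hc.
  have := mtri (xi t) (y (h t)) (y (t + c t)); lra.
have Lt1 : forall t1, t1 <= t -> t1 + c t1 <= t + c t.
  move=> t1 t1t; have := Lc t t1; rewrite (ger0_norm (_ : 0 <= t - t1)); last by lra.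
  rewrite ler_norml => /andP[H1 H2]; nra.
have Lt2 : forall t1, t <= t1 -> t + c t <= t1 + c t1.
  move=> t1 t1t; have := Lc t1 t; rewrite (ger0_norm (_ : 0 <= t1 - t)); last by lra.
  rewrite ler_norml => /andP[H1 H2]; nra.
have [[At JA]|[Bt JB]] := PJ t nJt.
-
  have hsJ : has_sup J by split => //; exists t => t' /JA /ltW.
  set S := sup J.
  have St : S <= t by apply: ge_sup => // t' /JA /ltW.
  have [th th0 Hth] := hcont_at S _ s0.
  have [t1 Jt1 t1S] := sup_adherent th0 hsJ; rewrite -/S in t1S.
  have t1S' : t1 <= S by apply: sup_upper_bound.
  have [t2 [t2t St2 t2S At2]] : exists t2, [/\ t2 <= t, S <= t2, `|S - t2| < th & A t2].
    have [tS|tS] := ltP t (S + th / 2).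
      exists t; split => //; rewrite ler0_norm ?subr_le0 //; lra.
    exists (S + th / 2); split => //; first by lra.
      by rewrite ler0_norm; lra.
    have nJ : ~ J (S + th / 2).
      move=> /(sup_upper_bound hsJ); rewrite -/S; lra.
    have [[]//|[_ H]] := PJ _ nJ.
    have := H t1 Jt1; lra.
  have [u [ut2 Nsu]] := At2.
  have [p Hp] := Ns_fwd u Nsu.
  have Hp1 : mdist p (y (h t)) < rho by apply: Hp; apply: (le_trans ut2); apply: hle.
  have e1 : `|h S - h t2| < sig by apply: Hth.
  have e2 : `|h S - h t1| < sig by apply: Hth; rewrite ger0_norm; lra.
  have /andP[c1 _] := cJ t1 Jt1.
  have tt1 := Lt1 t1 (ltW (JA t1 Jt1)).
  have Hp2 : mdist p (y (t + c t)) < 2 * rho.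
    have [uu|uu] := leP u (t + c t).
      by have := Hp _ uu; lra.
    have Hu : mdist p (y (h t2)) < rho by apply: Hp.
    have Hc : `|t + c t - h t2| <= 3 * sig.
      move: e1 e2; rewrite !ltr_norml => /andP[e1 e1'] /andP[e2 e2'].
      rewrite ler0_norm; lra.
    have := yclose _ _ Hc; have := mtri p (y (h t2)) (y (t + c t)); lra.
  have := mtri (xi t) (y (h t)) (y (t + c t)); have := mtri (y (h t)) p (y (t + c t)).
  rewrite (msym (y (h t)) p); lra.
-
  have hiJ : has_inf J by split => //; exists t => t' /JB /ltW.
  set S := inf J.
  have St : t <= S by apply: lb_le_inf => // t' /JB /ltW.
  have [th th0 Hth] := hcont_at S _ s0.
  have [t1 Jt1 t1S] := inf_adherent th0 hiJ; rewrite -/S in t1S.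
  have t1S' : S <= t1 by apply: ge_inf => //; case: hiJ.
  have [t2 [t2t St2 t2S Bt2]] : exists t2, [/\ t <= t2, t2 <= S, `|S - t2| < th & B t2].
    have [tS|tS] := ltP (S - th / 2) t.
      exists t; split => //; rewrite ger0_norm ?subr_ge0 //; lra.
    exists (S - th / 2); split => //; first by lra.
      by rewrite ger0_norm; lra.
    have nJ : ~ J (S - th / 2).
      move=> H; have := ge_inf hiJ.2 H; rewrite -/S; lra.
    have [[_ H]|[]//] := PJ _ nJ.
    have := H t1 Jt1; lra.
  have [u [ut2 Nuu]] := Bt2.
  have [p Hp] := Nu_bwd u Nuu.
  have Hp1 : mdist p (y (h t)) < rho by apply: Hp; apply: (le_trans _ ut2); apply: hle.
  have e1 : `|h S - h t2| < sig by apply: Hth.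
  have e2 : `|h S - h t1| < sig by apply: Hth; rewrite ler0_norm; lra.
  have /andP[_ c2] := cJ t1 Jt1.
  have tt1 := Lt2 t1 (ltW (JB t1 Jt1)).
  have Hp2 : mdist p (y (t + c t)) < 2 * rho.
    have [uu|uu] := leP (t + c t) u.
      by have := Hp _ uu; lra.
    have Hu : mdist p (y (h t2)) < rho by apply: Hp.
    have Hc : `|t + c t - h t2| <= 3 * sig.
      move: e1 e2; rewrite !ltr_norml => /andP[e1 e1'] /andP[e2 e2'].
      rewrite ger0_norm; lra.
    have := yclose _ _ Hc; have := mtri p (y (h t2)) (y (t + c t)); lra.
  have := mtri (xi t) (y (h t)) (y (t + c t)); have := mtri (y (h t)) p (y (t + c t)).
  rewrite (msym (y (h t)) p); lra.
Qed.

Lemma shadow_exists : exists h', is_Rep_eps eps h' /\ forall t, mdist (xi t) (phi (h' t) x) < eps.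
Proof.
have s4 := sig4; have s0 := sig0; have r4 := rhoe; have er := eprho; have r0 := rho0.
have [g [hg gh _]] : exists g, [/\ cancel h g, cancel g h & continuous g].
  by case: hR => _ [[g [? [? ?]]] _]; exists g; split.
have eps0 : 0 < eps by lra.
have [allA|/existsNP [t1 nA1]] := pselect (forall t, A t).
  exists (fun t => t + (fun _ => 0) t); split.
    apply: (@lip_Rep _ _ 0) => //.
    by move=> a b; rewrite subrr normr0 mul0r.
  move=> t; rewrite addr0.
  have [u [uw Nsu]] := allA (g (Num.min (h t) t)); rewrite gh in uw.
  have [p Hp] := Ns_fwd u Nsu.
  have H1 : mdist p (y (h t)) < rho by apply: Hp; apply: (le_trans uw); rewrite ge_min lexx.
  have H2 : mdist p (y t) < rho by apply: Hp; apply: (le_trans uw); rewrite ge_min lexx orbT.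
  have := Hh t; have := mtri (xi t) (y (h t)) (y t); have := mtri (y (h t)) p (y t).
  rewrite (msym (y (h t)) p); lra.
have [allB|/existsNP [t2 nB2]] := pselect (forall t, B t).
  exists (fun t => t + (fun _ => 0) t); split.
    apply: (@lip_Rep _ _ 0) => //.
    by move=> a b; rewrite subrr normr0 mul0r.
  move=> t; rewrite addr0.
  have [u [uw Nuu]] := allB (g (Num.max (h t) t)); rewrite gh in uw.
  have [p Hp] := Nu_bwd u Nuu.
  have H1 : mdist p (y (h t)) < rho by apply: Hp; apply: (le_trans _ uw); rewrite le_max lexx.
  have H2 : mdist p (y t) < rho by apply: Hp; apply: (le_trans _ uw); rewrite le_max lexx orbT.
  have := Hh t; have := mtri (xi t) (y (h t)) (y t); have := mtri (y (h t)) p (y t).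
  rewrite (msym (y (h t)) p); lra.
suff [J [Jne Jch PJ]] : exists J : set R, [/\ J !=set0,
    (forall a b, J a -> J b -> `|(h a - a) - (h b - b)| <= sig * (`|a - b| + 1)) &
    (forall t, ~ J t -> (A t /\ forall t', J t' -> t' < t) \/ (B t /\ forall t', J t' -> t < t'))].
  have [c [Lc cJ]] := mcshane _ _ _ Jne (ltW s0) Jch.
  exists (fun t => t + c t); split; last exact: core _ _ Jne Lc cJ PJ.
  by apply: (@lip_Rep _ _ (2 * sig)) => //; lra.
have [[t0 It0]|nI] := pselect (exists t, I t).
  exists I; split.
  - by exists t0.
  - apply: chain; first exact: ltW.
      by move=> a b r Ia Ib abr; apply: (I_int a b).
    by move=> a b Ia Ib ab; apply: unit_est.
  move=> t nIt.
  have : A t \/ B t.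
    by apply: contrapT => /not_orP [nA nB]; apply: nIt.
  case=> [At|Bt]; [left|right]; split => // t' [nAt' nBt'].
    rewrite ltNge; apply/negP => tt'; apply: nAt'; exact: (A_up _ _ At tt').
  rewrite ltNge; apply/negP => tt'; apply: nBt'; exact: (B_down _ _ Bt tt').
have nI' : forall t, A t \/ B t.
  move=> t; apply: contrapT => /not_orP [nA nB]; apply: nI; by exists t.
have B1 : B t1 by case: (nI' t1).
have ubB : forall t, B t -> t < t2.
  move=> t Bt; rewrite ltNge; apply/negP => tt2; apply: nB2; exact: (B_down _ _ Bt tt2).
have hsB : has_sup B by split; [exists t1 | exists t2 => t /ubB /ltW].
set S := sup B.
exists [set S]; split.
- by exists S.
- by move=> a b -> ->; rewrite !subrr !normr0 add0r mulr1; exact: ltW.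
move=> t /= tS.
have [St|tS'] := ltP S t.
  left; split; last by move=> _ ->.
  case: (nI' t) => // Bt; have := sup_upper_bound hsB Bt; rewrite -/S; lra.
right; split; last first.
  by move=> _ ->; rewrite lt_neqAle tS' andbT; apply/eqP.
have tS2 : t < S by rewrite lt_neqAle tS' andbT; apply/eqP.
have St0 : 0 < S - t by lra.
have [t' Bt' tt'] := sup_adherent St0 hsB.
rewrite -/S in tt'; apply: (B_down _ _ Bt'); lra.
Qed.
End Main.

Lemma standard_to_oriented (R : realType) (M : metricType R) (phi : R -> M -> M) :
  standard_shadowing phi -> oriented_shadowing phi.
Proof.
move=> H eps eps0; have [d d0 Hd] := H eps eps0; exists d => // xi /Hd [x [h [hR _] Hh]].
by exists x; exists h.
Qed.

Theorem theorem1p1 (R : realType) (M : metricType R) (phi : R -> M -> M) :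
  compact [set: M] ->
  is_flow phi ->
  finite_set (Sing phi) ->
  (forall p, Sing phi p -> lyapunov_stable phi p \/ lyapunov_unstable phi p) ->
  (oriented_shadowing phi <-> standard_shadowing phi).
Proof.
move=> cM fl fin ly; split; last exact: standard_to_oriented.
move=> Hor eps eps0.
set rho := eps / 8.
have rho0 : 0 < rho by rewrite divr_gt0.
have r4 : 4 * rho < eps by rewrite /rho; lra.
have [eta eta0 [etarho Heta]] := @lyap_eta _ _ phi fin ly rho rho0.
have eta2 : 0 < eta / 2 by rewrite divr_gt0.
have mb : 0 < Num.min (eta / 2) rho by rewrite lt_min eta2 rho0.
have [be be0 Hbe] := @time_mod _ _ phi fl cM _ mb.
have Hbe1 : forall a z, `|a| <= be -> mdist z (phi a z) < eta / 2.
  by move=> a z /(Hbe _ z); rewrite lt_min => /andP[].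
have Hbe2 : forall a z, `|a| <= be -> mdist z (phi a z) < rho.
  by move=> a z /(Hbe _ z); rewrite lt_min => /andP[].
have [s0 s00 Hs0] := @no_small_period _ _ phi fl cM _ eta2.
set sig := Num.min (Num.min (be / 3) s0) (Num.min (eps / 4) (4^-1)).
have be3 : 0 < be / 3 by rewrite divr_gt0.
have eps4 : 0 < eps / 4 by rewrite divr_gt0.
have i4 : 0 < 4^-1 :> R by rewrite invr_gt0.
have sig0 : 0 < sig by rewrite /sig !lt_min be3 s00 eps4 i4.
have sigbe : 3 * sig <= be.
  have : sig <= be / 3 by rewrite !ge_min lexx.
  lra.
have sigs0 : sig <= s0 by rewrite !ge_min lexx orbT.
have sig4 : sig <= 4^-1 by rewrite !ge_min lexx !orbT.
have sige : 2 * sig < eps.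
  have : sig <= eps / 4 by rewrite !ge_min lexx orbT.
  lra.
have Hs : forall z, far phi (eta / 2) z -> phi sig z != z.
  by move=> z Fz; apply: Hs0 => //; rewrite sig0 sigs0.
have [m m0 Hm] := @m_pos _ _ phi fl cM _ _ eta2 sig0 Hs.
have m3 : 0 < m / 3 by rewrite divr_gt0.
have [de de0 Hde] := @space_mod _ _ phi fl cM _ m3.
set ep := Num.min (Num.min de (m / 3)) rho.
have ep0 : 0 < ep by rewrite !lt_min de0 m3 rho0.
have epde : ep <= de by rewrite !ge_min lexx.
have epm : ep <= m / 3 by rewrite !ge_min lexx orbT.
have eprho : ep <= rho by rewrite !ge_min lexx !orbT.
have [d0 d00 Hd0] := Hor ep ep0.
set d := Num.min d0 (m / 3).
have dm : d <= m / 3 by rewrite ge_min lexx orbT.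
have d0' : 0 < d by rewrite lt_min d00 m3.
exists d => // xi pxi.
have pxi0 : pseudotrajectory phi d0 xi.
  move=> t s s01; apply: (lt_le_trans (pxi t s s01)); by rewrite ge_min lexx.
have [x [h hR Hh]] := Hd0 xi pxi0.
have [h' [Rh' Hh']] := @shadow_exists R M phi fl eps rho eta be sig ep d m de rho0 r4 Heta Hbe1 Hbe2 sig0 sigbe sig4 sige Hm Hde epde epm eprho dm xi pxi x h hR Hh.
by exists x; exists h'.
Qed.
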